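(* Assume $FCA^\Delta$. Then there is an entangled set of reals, i.e. an uncountable $\mathcal{E}\subseteq\mathbb{R}$ which is $k$-entangled for every $k\in\omega$.
   Context: For a finite set $a$ of reals, $a(i)$ is its $i$-th element in increasing order. An uncountable $\mathcal{E}\subseteq\mathbb{R}$ is $k$-entangled if for every uncountable family $\mathcal{A}\subseteq[\mathcal{E}]^k$ of pairwise disjoint sets and every $t:k\to\{<,>\}$ there are distinct $a,b\in\mathcal{A}$ with $a(i)\ t(i)\ b(i)$ for all $i<k$. $FCA^\Delta$ is the statement: for every good type $\tau$ there is a fully $\Delta$-capturing construction scheme of type $\tau$ over $\omega_1$. Definitions: a type is a sequence $\tau=\langle m_k,n_{k+1},r_{k+1}\rangle_{k\in\omega}$ of natural numbers with $m_0=1$ and, for all $k$, $n_{k+1}\geq2$, $m_k>r_{k+1}$, $m_{k+1}=r_{k+1}+(m_k-r_{k+1})n_{k+1}$; good if every $r$ equals $r_k$ for infinitely many $k\geq1$. $A<B$ means every element of $A$ is below every element of $B$; $D(a)$ is the $a$-th element of a finite set of ordinals $D$. A construction scheme of type $\tau$ over a set of ordinals $Y$ is a family $\mathcal{F}$ of nonempty finite subsets of $Y$, cofinal among finite subsets of $Y$ under $\subseteq$, each of size $m_k$ for some $k$, with $\mathcal{F}_k=\{F\in\mathcal{F}:|F|=m_k\}$ satisfying: (i) for $E,F\in\mathcal{F}_k$, $E\cap F$ is an initial segment of both; (ii) every $F\in\mathcal{F}_{k+1}$ equals $F_0\cup\dots\cup F_{n_{k+1}-1}$ with $F_i\in\mathcal{F}_k$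 a $\Delta$-system with root $R(F)$, $|R(F)|=r_{k+1}$, $R(F)<F_0\setminus R(F)<\dots<F_{n_{k+1}-1}\setminus R(F)$. $\rho(\alpha,\beta)=\min\{k:\exists F\in\mathcal{F}_k\ \{\alpha,\beta\}\subseteq F\}$; $\lVert\alpha\rVert_k=|\{\xi<\alpha:\rho(\xi,\alpha)\leq k\}|$; $\Delta(\alpha,\beta)=\min\{k:\lVert\alpha\rVert_k\neq\lVert\beta\rVert_k\}$ ($\omega$ if none); for $k\geq1$, $\Xi_\alpha(k)=-1$ if $\alpha\in R(F)$, $=i$ if $\alpha\in F_i\setminus R(F)$, for any $F\in\mathcal{F}_k$ containing $\alpha$. A root-tail-tail $\Delta$-system is a sequence $\langle D_i\rangle_{i<n}$, $n\geq2$, of finite sets of ordinals of common size $m$ with pairwise intersections $R$, $R<D_i\setminus R$, $D_0\setminus R<\dots<D_{n-1}\setminus R$; $r=|R|$. It is fully $\Delta$-captured at level $l\geq1$ if $n=n_l$, (I) $\Xi_{D_i(a)}(l)=-1$ for $a<r$ and $=i$ for $a\geq r$ ($i<n$, $a<m$), and (II) $\Delta(D_i(a),D_j(a))=l$ for $i<j<n$, $r\leq a<m$. A scheme over $\omega_1$ is fully $\Delta$-capturing if for every uncountable family $\mathcal{S}$ of nonempty finite subsets of $\omega_1$ there are infinitely many $l$ for which some $n_l$ distinct members of $\mathcal{S}$, suitably enumerated, form a root-tail-tail $\Delta$-system fully $\Delta$-captured at level $l$. *)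

(* Defs.v *)
From Stdlib Require Import Reals List Sorted Lia.
Open Scope R_scope.

Definition countable {X : Type} (P : X -> Prop) : Prop :=
  exists f : X -> nat, forall x y, P x -> P y -> f x = f y -> x = y.

Definition is_omega1 (T : Type) (lt : T -> T -> Prop) : Prop :=
  (forall x, ~ lt x x) /\
  (forall x y z, lt x y -> lt y z -> lt x z) /\
  (forall x y, lt x y \/ x = y \/ lt y x) /\
  well_founded lt /\
  ~ countable (fun _ : T => True) /\
  (forall a, countable (fun x => lt x a)).

(* Types tau = <m_k, n_{k+1}, r_{k+1}>; n 0 and r 0 are unused. *)
Record typ := mkTyp { tm : nat -> nat; tn : nat -> nat; tr : nat -> nat }.

Definition is_type (t : typ) : Prop :=
  tm t 0 = 1%nat /\
  forall k, (2 <= tn t (S k))%nat /\ (tr t (S k) < tm t k)%nat /\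
            tm t (S k) = (tr t (S k) + (tm t k - tr t (S k)) * tn t (S k))%nat.

Definition good_type (t : typ) : Prop :=
  forall r N : nat, exists k, (N < k)%nat /\ tr t k = r.

Section Scheme.
Variable T : Type.
Variable lt : T -> T -> Prop.

(* finite sets of ordinals = strictly increasing lists; D(a) = nth_error D a *)
Definition fin_set (l : list T) : Prop := Sorted lt l.

Definition rtt (D : nat -> list T) (n : nat) (R : list T) : Prop :=
  (2 <= n)%nat /\ fin_set R /\
  (forall i, (i < n)%nat -> fin_set (D i)) /\
  (forall i j, (i < n)%nat -> (j < n)%nat -> length (D i) = length (D j)) /\
  (forall i j, (i < n)%nat -> (j < n)%nat -> i <> j ->
     forall x, (In x (D i) /\ In x (D j)) <-> In x R) /\
  (forall i x y, (i < n)%nat -> In x R -> In y (D i) -> ~ In y R -> lt x y) /\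
  (forall i j x y, (i < j)%nat -> (j < n)%nat ->
     In x (D i) -> ~ In x R -> In y (D j) -> ~ In y R -> lt x y).

Variable t : typ.
Variable F : list T -> Prop.

Definition level (k : nat) (E : list T) : Prop := F E /\ length E = tm t k.

Definition decomposition (k : nat) (E : list T) (Fs : nat -> list T) (R : list T) : Prop :=
  length R = tr t (S k) /\ rtt Fs (tn t (S k)) R /\
  (forall i, (i < tn t (S k))%nat -> level k (Fs i)) /\
  (forall x, In x E <-> exists i, (i < tn t (S k))%nat /\ In x (Fs i)).

Definition initseg (E E' : list T) : Prop :=
  forall x y, In x E -> In x E' -> In y E -> lt y x -> In y E'.

Definition is_scheme : Prop :=
  (forall E, F E -> E <> nil /\ fin_set E /\ exists k, length E = tm t k) /\
  (forall A, fin_set A -> exists E, F E /\ incl A E) /\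
  (forall k E E', level k E -> level k E' -> initseg E E' /\ initseg E' E) /\
  (forall k E, level (S k) E -> exists Fs R, decomposition k E Fs R).

Definition rho_le (x y : T) (k : nat) : Prop :=
  exists j, (j <= k)%nat /\ exists E, level j E /\ In x E /\ In y E.

Definition card_is (P : T -> Prop) (c : nat) : Prop :=
  exists l, NoDup l /\ length l = c /\ forall x, P x <-> In x l.

Definition norm_is (a : T) (k c : nat) : Prop :=
  card_is (fun x => lt x a /\ rho_le x a k) c.

Definition norm_eq (a b : T) (k : nat) : Prop :=
  exists c, norm_is a k c /\ norm_is b k c.

Definition Delta_is (a b : T) (l : nat) : Prop :=
  ~ norm_eq a b l /\ forall k, (k < l)%nat -> norm_eq a b k.

(* Xi_a(l) = v, with None standing for -1 and Some i for i *)
Definition Xi_class (n : nat) (Fs : nat -> list T) (R : list T) (a : T) (v : option nat) : Prop :=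
  match v with
  | None => In a R
  | Some i => (i < n)%nat /\ In a (Fs i) /\ ~ In a R
  end.

Definition Xi_is (a : T) (l : nat) (v : option nat) : Prop :=
  match l with
  | O => False
  | S k => (exists E, level (S k) E /\ In a E) /\
           forall E Fs R, level (S k) E -> In a E -> decomposition k E Fs R ->
             Xi_class (tn t (S k)) Fs R a v
  end.

(* fully Delta-captured at level l (n, r, m read off D and R) *)
Definition fully_captured (D : nat -> list T) (n : nat) (R : list T) (l : nat) : Prop :=
  (1 <= l)%nat /\ n = tn t l /\
  (forall i a x, (i < n)%nat -> (a < length (D 0%nat))%nat -> nth_error (D i) a = Some x ->
     ((a < length R)%nat -> Xi_is x l None) /\
     ((length R <= a)%nat -> Xi_is x l (Some i))) /\
  (forall i j a x y, (i < j)%nat -> (j < n)%nat ->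
     (length R <= a)%nat -> (a < length (D 0%nat))%nat ->
     nth_error (D i) a = Some x -> nth_error (D j) a = Some y -> Delta_is x y l).

Definition fully_capturing : Prop :=
  forall S : list T -> Prop,
    (forall s, S s -> s <> nil /\ fin_set s) ->
    ~ countable S ->
    forall N, exists l, (N < l)%nat /\
      exists (D : nat -> list T) (R : list T),
        (forall i, (i < tn t l)%nat -> S (D i)) /\
        (forall i j, (i < tn t l)%nat -> (j < tn t l)%nat -> D i = D j -> i = j) /\
        rtt D (tn t l) R /\
        fully_captured D (tn t l) R l.

End Scheme.

Definition FCA_Delta (T : Type) (lt : T -> T -> Prop) : Prop :=
  forall t : typ, is_type t -> good_type t ->
    exists F : list T -> Prop, is_scheme T lt t F /\ fully_capturing T lt t F.

(* entangled sets of reals; [E]^k = strictly increasing k-lists from E *)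
Definition k_subset (E : R -> Prop) (k : nat) (a : list R) : Prop :=
  Sorted Rlt a /\ length a = k /\ forall x, In x a -> E x.

Definition k_entangled (E : R -> Prop) (k : nat) : Prop :=
  ~ countable E /\
  forall A : list R -> Prop,
    (forall a, A a -> k_subset E k a) ->
    (forall a b, A a -> A b -> a <> b -> forall x, In x a -> ~ In x b) ->
    ~ countable A ->
    forall tt : nat -> bool,
      exists a b, A a /\ A b /\ a <> b /\
        forall i x y, (i < k)%nat -> nth_error a i = Some x -> nth_error b i = Some y ->
          (if tt i then x < y else x > y).

Definition entangled (E : R -> Prop) : Prop :=
  ~ countable E /\ forall k, k_entangled E k.

(* Main.v *)
Require Import Defs.
From Stdlib Require Import Reals List Sorted Lia Arith Lra ClassicalEpsilon Classical Cantor.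

Module Part1.
Local Open Scope nat_scope.

Section Card.
Context {X : Type}.

Lemma card_unique (P : X -> Prop) c d : card_is X P c -> card_is X P d -> c = d.
Proof.
  intros [l1 [N1 [L1 H1]]] [l2 [N2 [L2 H2]]].
  assert (length l1 <= length l2).
  { apply NoDup_incl_length; auto. intros x Hx. apply H2, H1, Hx. }
  assert (length l2 <= length l1).
  { apply NoDup_incl_length; auto. intros x Hx. apply H1, H2, Hx. }
  lia.
Qed.

Lemma card_ext (P Q : X -> Prop) c : (forall x, P x <-> Q x) -> card_is X P c -> card_is X Q c.
Proof.
  intros E [l [N [L H]]]. exists l. split; [auto|split;[auto|]]. intro x. rewrite <- E. apply H.
Qed.

Lemma card_app (P Q : X -> Prop) c d : card_is X P c -> card_is X Q d ->
  (forall x, P x -> Q x -> False) -> card_is X (fun x => P x \/ Q x) (c + d).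
Proof.
  intros [l1 [N1 [L1 H1]]] [l2 [N2 [L2 H2]]] D.
  exists (l1 ++ l2). split; [|split].
  - apply NoDup_app; auto. intros a Ha Hb. apply (D a); [apply H1|apply H2]; auto.
  - rewrite length_app. lia.
  - intro x. rewrite in_app_iff. rewrite H1, H2. tauto.
Qed.

Lemma card_list (l : list X) : NoDup l -> card_is X (fun x => In x l) (length l).
Proof. intro N. exists l. split; [auto|split;[auto|]]. tauto. Qed.

Lemma card_exists (P : X -> Prop) (l : list X) : NoDup l -> (forall x, P x -> In x l) ->
  exists c, card_is X P c.
Proof.
  intros N H.
  set (f := fun x => if excluded_middle_informative (P x) then true else false).
  exists (length (filter f l)). exists (filter f l). split; [apply NoDup_filter; auto|split;[auto|]].
  intro x. rewrite filter_In. unfold f. destruct (excluded_middle_informative (P x)).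
  - split; auto.
  - split; [intro; contradiction| intros [_ Hf]; discriminate].
Qed.

Lemma card_le (P Q : X -> Prop) c d : card_is X P c -> card_is X Q d ->
  (forall x, P x -> Q x) -> c <= d.
Proof.
  intros [l1 [N1 [L1 H1]]] [l2 [N2 [L2 H2]]] S. subst.
  apply NoDup_incl_length; auto. intros x Hx. apply H2, S, H1, Hx.
Qed.

Lemma card_lt (P Q : X -> Prop) c d z : card_is X P c -> card_is X Q d ->
  (forall x, P x -> Q x) -> Q z -> ~ P z -> c < d.
Proof.
  intros [l1 [N1 [L1 H1]]] [l2 [N2 [L2 H2]]] Sb Qz Pz. subst.
  enough (length (z :: l1) <= length l2) by (simpl in *; lia).
  apply NoDup_incl_length.
  - constructor; auto. intro I. apply Pz, H1, I.
  - intros x [<-|Hx]; apply H2; auto. apply Sb, H1, Hx.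
Qed.

Lemma card_zero : card_is X (fun _ => False) 0.
Proof. exists nil. split; [constructor|split;[auto|]]. simpl; tauto. Qed.

End Card.

End Part1.
Import Part1.

Module Part2.
Local Open Scope nat_scope.

Section Ord.
Context {T : Type} (lt : T -> T -> Prop).
Hypothesis irr : forall x, ~ lt x x.
Hypothesis trans : forall x y z, lt x y -> lt y z -> lt x z.
Hypothesis tri : forall x y, lt x y \/ x = y \/ lt y x.

Lemma asym x y : lt x y -> lt y x -> False.
Proof. intros; apply (irr x); eauto. Qed.

Lemma to_ss l : Sorted lt l -> StronglySorted lt l.
Proof. apply Sorted_StronglySorted. intros x y z; apply trans. Qed.

Lemma ss_nodup l : StronglySorted lt l -> NoDup l.
Proof.
  induction 1; constructor; auto.
  intro I. rewrite Forall_forall in H0. apply (irr a), H0, I.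
Qed.

Lemma sorted_nodup l : Sorted lt l -> NoDup l.
Proof. intro; apply ss_nodup, to_ss; auto. Qed.

Lemma ss_eq l1 : StronglySorted lt l1 -> forall l2, StronglySorted lt l2 ->
  (forall x, In x l1 <-> In x l2) -> l1 = l2.
Proof.
  induction 1 as [|a l1 S1 IH F1]; intros l2 S2 E.
  - destruct l2 as [|b l2]; auto. exfalso. apply (E b). left; auto.
  - destruct S2 as [|b l2 S2 F2].
    + exfalso. apply (E a). left; auto.
    + rewrite Forall_forall in F1, F2.
      assert (a = b).
      { destruct (proj1 (E a) (or_introl eq_refl)) as [->|Ha]; auto.
        destruct (proj2 (E b) (or_introl eq_refl)) as [->|Hb]; auto.
        exfalso. apply (asym a b); auto. }
      subst b. f_equal. apply IH; auto.
      intro x; split; intro Hx.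
      * destruct (proj1 (E x) (or_intror Hx)) as [Ex|]; auto.
        subst x. exfalso; apply (irr a); auto.
      * destruct (proj2 (E x) (or_intror Hx)) as [Ex|]; auto.
        subst x. exfalso; apply (irr a); auto.
Qed.

Lemma sorted_eq l1 l2 : Sorted lt l1 -> Sorted lt l2 ->
  (forall x, In x l1 <-> In x l2) -> l1 = l2.
Proof. intros; apply ss_eq; try apply to_ss; auto. Qed.

Lemma ss_insert s : StronglySorted lt s -> forall a, exists s', StronglySorted lt s' /\
  forall y, In y s' <-> y = a \/ In y s.
Proof.
  induction 1 as [|b s S IH F]; intro a.
  - exists (a :: nil). split. { constructor; constructor. } simpl. intuition.
  - rewrite Forall_forall in F.
    destruct (tri a b) as [ab|[<-|ba]].
    + exists (a :: b :: s). split.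
      * constructor. { constructor; auto. rewrite Forall_forall; auto. }
        rewrite Forall_forall. intros x [<-|Hx]; eauto.
      * simpl. intuition.
    + exists (a :: s). split. { constructor; auto. rewrite Forall_forall; auto. }
      simpl; intuition.
    + destruct (IH a) as [s' [S' E']]. exists (b :: s'). split.
      * constructor; auto. rewrite Forall_forall. intros x Hx.
        apply E' in Hx. destruct Hx as [->|Hx]; auto.
      * intro y. simpl. rewrite E'. intuition.
Qed.

Lemma ss_nth l : StronglySorted lt l -> forall i j x y, i < j ->
  nth_error l i = Some x -> nth_error l j = Some y -> lt x y.
Proof.
  induction 1 as [|a l S IH F]; intros i j x y ij Hi Hj.
  - destruct i; discriminate.
  - rewrite Forall_forall in F. destruct j as [|j]; [lia|].
    destruct i as [|i].
    + simpl in Hi, Hj. injection Hi as <-. apply F. eapply nth_error_In; eauto.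
    + simpl in Hi, Hj. apply (IH i j); auto. lia.
Qed.

End Ord.

End Part2.
Import Part2.

Module Part3.
Local Open Scope nat_scope.

Section Sch.
Context {T : Type} (lt : T -> T -> Prop).
Hypothesis irr : forall x, ~ lt x x.
Hypothesis trans : forall x y z, lt x y -> lt y z -> lt x z.
Hypothesis tri : forall x y, lt x y \/ x = y \/ lt y x.
Variable t : typ.
Variable F : list T -> Prop.
Hypothesis Hs : is_scheme T lt t F.

Notation lev := (level T t F).

Lemma lev_ss k E : lev k E -> StronglySorted lt E.
Proof. intros [HF _]. destruct Hs as [A _]. apply (to_ss lt trans), (A E HF). Qed.

Lemma lev_nodup k E : lev k E -> NoDup E.
Proof. intro H. apply (ss_nodup lt irr), (lev_ss k), H. Qed.

Lemma lev_dec k E : lev (S k) E -> exists Fs R, decomposition T lt t F k E Fs R.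
Proof. destruct Hs as [_ [_ [_ D]]]. apply D. Qed.

Lemma dec_sub k E Fs R i x : decomposition T lt t F k E Fs R -> i < tn t (S k) ->
  In x (Fs i) -> In x E.
Proof. intros [_ [_ [_ M]]] Hi Hx. apply M. eauto. Qed.

Lemma rtt_root D n R i x : rtt T lt D n R -> i < n -> In x R -> In x (D i).
Proof.
  intros [n2 [_ [_ [_ [I _]]]]] Hi Hx.
  destruct i as [|i].
  - apply (I 0 1); auto; lia.
  - apply (I (S i) 0); auto; lia.
Qed.

Lemma lemQ d : forall L K G E g y, K = L + d -> lev L G -> lev K E -> In g G -> In g E ->
  In y G -> lt y g -> In y E.
Proof.
  induction d as [|d IH]; intros L K G E g y HK HG HE Hg1 Hg2 Hy Hyg.
  - rewrite Nat.add_0_r in HK. subst K. destruct Hs as [_ [_ [C _]]].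
    destruct (C L G E HG HE) as [I _]. exact (I g y Hg1 Hg2 Hy Hyg).
  - rewrite Nat.add_succ_r in HK. subst K.
    destruct (lev_dec _ _ HE) as [Fs [R D]].
    pose proof D as [_ [_ [Hl M]]].
    destruct (proj1 (M g) Hg2) as [i [Hi Hgi]].
    eapply (dec_sub _ _ _ _ i); eauto.
Qed.

Definition nv (a : T) (k : nat) : nat := epsilon (inhabits 0) (fun c => norm_is T lt t F a k c).

Lemma norm_char K E a c : lev K E -> In a E ->
  (norm_is T lt t F a K c <-> card_is T (fun x => In x E /\ lt x a) c).
Proof.
  intros HE Ha. unfold norm_is. split; apply card_ext; intro x.
  - split.
    + intros [xa [j [jK [G [HG [Hx Ha']]]]]]. split; auto.
      apply (lemQ (K - j) j K G E a x); auto. lia.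
    + intros [Hx xa]. split; auto. exists K. split; [lia|]. exists E. auto.
  - split.
    + intros [Hx xa]. split; auto. exists K. split; [lia|]. exists E. auto.
    + intros [xa [j [jK [G [HG [Hx Ha']]]]]]. split; auto.
      apply (lemQ (K - j) j K G E a x); auto. lia.
Qed.

Lemma nv_spec K E a c : lev K E -> In a E ->
  card_is T (fun x => In x E /\ lt x a) c -> nv a K = c.
Proof.
  intros HE Ha Hc. apply (norm_char K E a c HE Ha) in Hc.
  unfold nv. pose proof (epsilon_spec (inhabits 0) (fun c => norm_is T lt t F a K c)
    (ex_intro _ c Hc)) as H. simpl in H.
  eapply card_unique; eauto.
Qed.

Lemma card_below K E a : lev K E -> exists c, card_is T (fun x => In x E /\ lt x a) c.
Proof. intro HE. apply (card_exists _ E). eapply lev_nodup; eauto. tauto. Qed.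

Lemma nv_bound K E a : lev K E -> In a E -> nv a K < tm t K.
Proof.
  intros HE Ha. destruct (card_below K E a HE) as [c Hc].
  rewrite (nv_spec K E a c HE Ha Hc).
  destruct HE as [HF HL]. rewrite <- HL.
  eapply (card_lt _ (fun x => In x E)); eauto.
  - apply card_list. eapply lev_nodup. split; eauto.
  - simpl. tauto.
  - simpl. intros [_ aa]. apply (irr a aa).
Qed.

Lemma nv_eq a b k : norm_eq T lt t F a b k -> nv a k = nv b k.
Proof.
  intros [c [Ha Hb]]. unfold nv.
  pose proof (epsilon_spec (inhabits 0) (fun c => norm_is T lt t F a k c) (ex_intro _ c Ha)) as H1.
  pose proof (epsilon_spec (inhabits 0) (fun c => norm_is T lt t F b k c) (ex_intro _ c Hb)) as H2.
  simpl in *.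
  rewrite (card_unique _ _ _ H1 Ha), (card_unique _ _ _ H2 Hb). auto.
Qed.

Lemma lev_down d : forall K k E a, K = k + d -> lev K E -> In a E -> exists E', lev k E' /\ In a E'.
Proof.
  induction d as [|d IH]; intros K k E a HK HE Ha.
  - rewrite Nat.add_0_r in HK; subst; eauto.
  - rewrite Nat.add_succ_r in HK. subst K.
    destruct (lev_dec _ _ HE) as [Fs [R D]].
    pose proof D as [_ [_ [Hl M]]].
    destruct (proj1 (M a) Ha) as [i [Hi Hai]].
    eapply (IH (k + d)); eauto.
Qed.

Lemma nv_lt_pos K E a b : lev K E -> In a E -> In b E -> lt a b -> nv a K < nv b K.
Proof.
  intros HE Ha Hb ab.
  destruct (card_below K E a HE) as [c Hc]. destruct (card_below K E b HE) as [d Hd].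
  rewrite (nv_spec K E a c HE Ha Hc), (nv_spec K E b d HE Hb Hd).
  eapply (card_lt _ _ _ _ a Hc Hd).
  - intros x [Hx xa]. split; eauto.
  - split; auto.
  - intros [_ aa]. apply (irr a aa).
Qed.

Lemma nv_zero E a : tm t 0 = 1 -> lev 0 E -> In a E -> nv a 0 = 0.
Proof.
  intros H0 HE Ha. apply (nv_spec 0 E a 0 HE Ha).
  destruct HE as [HF HL]. rewrite H0 in HL.
  destruct E as [|b [|c E]]; try discriminate.
  destruct Ha as [<-|[]].
  eapply card_ext; [|apply card_zero]. intro x; simpl. split; [tauto|].
  intros [[<-|[]] aa]. apply (irr _ aa).
Qed.


Lemma xi_norm l a i : Xi_is T lt t F a (S l) (Some i) ->
  exists F', lev l F' /\ In a F' /\ nv a (S l) = nv a l + i * (tm t l - tr t (S l)) /\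
    i < tn t (S l) /\ nv a (S l) < tm t (S l) /\ nv a l < tm t l.
Proof.
  intros [[E [HE Ha]] HX].
  destruct (lev_dec l E HE) as [Fs [R D]].
  specialize (HX E Fs R HE Ha D). simpl in HX. destruct HX as [Hi [HaF HaR]].
  pose proof D as [HR [Hrtt [Hl M]]].
  pose proof Hrtt as [n2 [sR [sD [lenD [I [Ord1 Ord2]]]]]].
  set (n := tn t (S l)) in *.
  set (Mm := tm t l - tr t (S l)).
  assert (CT: forall j, j < n -> card_is T (fun x => In x (Fs j) /\ ~ In x R) Mm).
  { intros j Hj.
    destruct (card_exists (fun x => In x (Fs j) /\ ~ In x R) (Fs j)) as [c Hc].
    { eapply lev_nodup; eauto. } { tauto. }
    assert (C1: card_is T (fun x => In x R \/ (In x (Fs j) /\ ~ In x R)) (length R + c)).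
    { apply card_app; auto. apply card_list. apply (sorted_nodup lt irr trans); auto.
      tauto. }
    assert (C2: card_is T (fun x => In x (Fs j)) (tm t l)).
    { destruct (Hl j Hj) as [_ L]. rewrite <- L. apply card_list. eapply lev_nodup; eauto. }
    assert (C3: card_is T (fun x => In x (Fs j)) (length R + c)).
    { eapply card_ext; [|exact C1]. intro x. split.
      - intros [H|[H _]]; auto. eapply rtt_root; eauto.
      - intro H. destruct (classic (In x R)); auto. }
    pose proof (card_unique _ _ _ C2 C3). replace Mm with c by (unfold Mm; lia). exact Hc. }
  assert (CU: forall i', i' <= n -> card_is T (fun x => exists j, j < i' /\ In x (Fs j) /\ ~ In x R) (i' * Mm)).
  { induction i' as [|i' IH]; intro Hi'.
    - eapply card_ext; [|apply card_zero]. intro x; split; [tauto|]. intros [j [Hj _]]; lia.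
    - replace (S i' * Mm) with (i' * Mm + Mm) by lia.
      eapply card_ext; [|apply card_app; [apply IH; lia| apply (CT i'); lia|]].
      + intro x. split.
        * intros [[j [Hj Hx]]|Hx]; [exists j; split; auto; lia| exists i'; split; auto].
        * intros [j [Hj Hx]]. destruct (Nat.eq_dec j i') as [->|]; auto. left. exists j. split; auto. lia.
      + intros x [j [Hj [Hx1 Hx2]]] [Hx3 _]. apply Hx2. apply (I j i'); auto; lia. }
  destruct (card_below l (Fs i) a (Hl i Hi)) as [p Hp].
  assert (CE: card_is T (fun x => In x E /\ lt x a) (p + i * Mm)).
  { eapply card_ext; [|apply card_app; [exact Hp | apply (CU i); lia|]].
    - intro x. split.
      + intros [[Hx xa]|[j [Hj [Hx1 Hx2]]]].
        * split; auto. apply (dec_sub l E Fs R i x D Hi Hx).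
        * split. { apply (dec_sub l E Fs R j x D); [lia|auto]. } apply (Ord2 j i); auto.
      + intros [Hx xa]. destruct (proj1 (M x) Hx) as [j [Hj Hxj]].
        destruct (classic (In x R)) as [HxR|HxR].
        * left. split; auto. eapply rtt_root; eauto.
        * destruct (Nat.lt_total j i) as [ji|[->|ij]].
          { right. exists j. auto. }
          { left. auto. }
          { exfalso. apply (asym lt irr trans a x); auto. apply (Ord2 i j); auto. }
    - intros x [Hx1 _] [j [Hj [Hx2 Hx3]]]. apply Hx3. apply (I j i); auto; lia. }
  exists (Fs i). split; [exact (Hl i Hi)|]. split; [exact HaF|].
  split; [rewrite (nv_spec _ _ _ _ HE Ha CE), (nv_spec _ _ _ _ (Hl i Hi) HaF Hp); reflexivity|].
  split; [exact Hi|]. split.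
  - exact (nv_bound _ _ _ HE Ha).
  - exact (nv_bound _ _ _ (Hl i Hi) HaF).
Qed.

End Sch.

End Part3.
Import Part3.

Module Part4.
Local Open Scope R_scope.

Section RealsSec.
Variable B : nat -> nat.

Fixpoint Wp (k : nat) : nat := match k with O => 1%nat | S k => (Wp k * (4 * S (B k)))%nat end.

Definition cd (e : nat -> nat) (k : nat) : nat := Nat.min (e k) (B k).

Definition term (e : nat -> nat) (k : nat) : R := INR (cd e k) / INR (Wp (S k)).

Fixpoint ps (e : nat -> nat) (N : nat) : R :=
  match N with O => 0 | S N => ps e N + term e N end.

Lemma Wp_pos k : 0 < INR (Wp k).
Proof.
  apply lt_0_INR. induction k; simpl; [lia|]. apply Nat.mul_pos_pos; lia.
Qed.

Lemma term_nonneg e k : 0 <= term e k.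
Proof.
  unfold term. apply Rmult_le_pos; [apply pos_INR|]. left. apply Rinv_0_lt_compat, Wp_pos.
Qed.

Lemma term_bound e N : term e N <= 1 / (2 * INR (Wp N)) - 1 / (2 * INR (Wp (S N))).
Proof.
  unfold term. change (Wp (S N)) with (Wp N * (4 * S (B N)))%nat. rewrite !mult_INR.
  pose proof (Wp_pos N) as Hw. set (w := INR (Wp N)) in *.
  assert (Hb : 1 <= INR (S (B N))). { rewrite S_INR. pose proof (pos_INR (B N)); lra. }
  set (b := INR (S (B N))) in *.
  assert (Hc : INR (cd e N) <= b - 1).
  { unfold b. rewrite S_INR. assert (INR (cd e N) <= INR (B N)) by (apply le_INR; unfold cd; lia). lra. }
  set (c := INR (cd e N)) in *.
  assert (E4 : INR 4 = 4) by (simpl; lra). rewrite E4.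
  assert (Eq : 1 / (2 * w) - 1 / (2 * (w * (4 * b))) - c / (w * (4 * b)) = (4 * b - 1 - 2 * c) / (8 * w * b)).
  { field. lra. }
  assert (0 <= (4 * b - 1 - 2 * c) / (8 * w * b)).
  { apply Rmult_le_pos; [lra|]. left. apply Rinv_0_lt_compat. apply Rmult_lt_0_compat; lra. }
  lra.
Qed.

Lemma ps_tail e a N : (a <= N)%nat -> ps e N - ps e a <= 1 / (2 * INR (Wp a)) - 1 / (2 * INR (Wp N)).
Proof.
  induction 1.
  - lra.
  - simpl ps. pose proof (term_bound e m). lra.
Qed.

Lemma ps_mono e a N : (a <= N)%nat -> ps e a <= ps e N.
Proof.
  induction 1; [lra|]. simpl. pose proof (term_nonneg e m). lra.
Qed.

Lemma ps_bound e N : ps e N <= 1.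
Proof.
  pose proof (ps_tail e 0 N ltac:(lia)). simpl in H.
  assert (0 < 1 / (2 * INR (Wp N))).
  { unfold Rdiv. rewrite Rmult_1_l. apply Rinv_0_lt_compat. pose proof (Wp_pos N). lra. }
  lra.
Qed.

Lemma ps_bnd e : bound (fun x => exists N, x = ps e N).
Proof. exists 1. intros x [N ->]. apply ps_bound. Qed.

Lemma ps_ne e : exists x, (fun x => exists N, x = ps e N) x.
Proof. exists 0. exists 0%nat. reflexivity. Qed.

Definition Vr (e : nat -> nat) : R := proj1_sig (completeness _ (ps_bnd e) (ps_ne e)).

Lemma Vr_ge e N : ps e N <= Vr e.
Proof.
  unfold Vr. pose proof (proj2_sig (completeness _ (ps_bnd e) (ps_ne e))) as [Hv _].
  apply Hv. exists N; auto.
Qed.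

Lemma Vr_le e b : (forall N, ps e N <= b) -> Vr e <= b.
Proof.
  intro H. unfold Vr. pose proof (proj2_sig (completeness _ (ps_bnd e) (ps_ne e))) as [_ Hv].
  apply Hv. intros x [N ->]. apply H.
Qed.

Lemma Vr_lt e e' l : (forall k, (k < l)%nat -> cd e k = cd e' k) -> (cd e l < cd e' l)%nat ->
  Vr e < Vr e'.
Proof.
  intros Ag Lt.
  assert (Pe : forall N, (N <= l)%nat -> ps e N = ps e' N).
  { induction N; intro HN; simpl; auto. rewrite IHN by lia. unfold term. rewrite Ag by lia. auto. }
  pose proof (Wp_pos (S l)) as Hw.
  assert (Ub : Vr e <= ps e (S l) + 1 / (2 * INR (Wp (S l)))).
  { apply Vr_le. intro N. destruct (le_lt_dec N (S l)) as [h|h].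
    - pose proof (ps_mono e N (S l) h).
      assert (0 < 1 / (2 * INR (Wp (S l)))).
      { unfold Rdiv. rewrite Rmult_1_l. apply Rinv_0_lt_compat. lra. }
      lra.
    - pose proof (ps_tail e (S l) N ltac:(lia)).
      assert (0 < 1 / (2 * INR (Wp N))).
      { unfold Rdiv. rewrite Rmult_1_l. apply Rinv_0_lt_compat. pose proof (Wp_pos N). lra. }
      lra. }
  pose proof (Vr_ge e' (S l)) as Lb.
  simpl ps in Ub, Lb. rewrite Pe in Ub by lia. unfold term in *.
  assert (Hc : INR (cd e l) + 1 <= INR (cd e' l)).
  { rewrite <- S_INR. apply le_INR. lia. }
  set (w := INR (Wp (S l))) in *.
  set (c := INR (cd e l)) in *. set (c' := INR (cd e' l)) in *.
  assert (c' / w - c / w - 1 / (2 * w) = (c' - c - 1/2) / w) by (field; lra).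
  assert (0 < (c' - c - 1/2) / w).
  { apply Rmult_lt_0_compat; [lra|]. apply Rinv_0_lt_compat. lra. }
  lra.
Qed.

End RealsSec.

End Part4.
Import Part4.

Module Part5.
Local Open Scope nat_scope.

Definition gq (k : nat) : nat := k - Nat.sqrt k * Nat.sqrt k.

Fixpoint mm (k : nat) : nat :=
  match k with O => 1 | S k => gq k + (mm k - gq k) * (2 * 2 ^ mm k) end.

Definition tau : typ := mkTyp mm (fun k => match k with O => 2 | S k => 2 * 2 ^ mm k end)
  (fun k => match k with O => 0 | S k => gq k end).

Lemma pow2_pos m : 1 <= 2 ^ m.
Proof. induction m; simpl; lia. Qed.

Lemma mm_ge k : k + 1 <= mm k.
Proof.
  induction k; simpl; [lia|].
  assert (gq k <= k) by (unfold gq; lia).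
  assert ((mm k - gq k) * 2 <= (mm k - gq k) * (2 * 2 ^ mm k)).
  { apply Nat.mul_le_mono_l. pose proof (pow2_pos (mm k)). lia. }
  lia.
Qed.

Lemma tau_type : is_type tau.
Proof.
  split; [reflexivity|]. intro k. simpl. split; [pose proof (pow2_pos (mm k)); lia|].
  split; [|reflexivity]. pose proof (mm_ge k). assert (gq k <= k) by (unfold gq; lia). lia.
Qed.

Lemma tau_good : good_type tau.
Proof.
  intros r N. set (s := N + r + 1). exists (S (s * s + r)). split; [nia|].
  simpl. unfold gq. rewrite (Nat.sqrt_unique (s * s + r) s); [lia|]. unfold s; nia.
Qed.

Lemma code_exists m : forall P : nat -> Prop, exists u, u < 2 ^ m /\
  forall x, x < m -> (Nat.testbit u x = true <-> P x).
Proof.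
  induction m as [|m IH]; intro P.
  - exists 0. split; [simpl; lia|]. intros; lia.
  - destruct (IH (fun x => P (S x))) as [u [Hu Hb]].
    destruct (classic (P 0)) as [H0|H0].
    + exists (2 * u + 1). split; [rewrite Nat.pow_succ_r'; lia|].
      intros [|x] Hx.
      * rewrite Nat.testbit_odd_0. tauto.
      * rewrite Nat.testbit_odd_succ'. apply Hb. lia.
    + exists (2 * u). split; [rewrite Nat.pow_succ_r'; lia|].
      intros [|x] Hx.
      * rewrite Nat.testbit_even_0. split; [discriminate|tauto].
      * rewrite Nat.testbit_even_succ'. apply Hb. lia.
Qed.

Lemma pigeon {X : Type} (S : X -> Prop) (g : X -> nat) : ~ countable S ->
  exists c, ~ countable (fun s => S s /\ g s = c).
Proof.
  intro NC. apply NNPP. intro H. apply NC.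
  assert (Hc : forall c, exists f : X -> nat, forall x y, (S x /\ g x = c) -> (S y /\ g y = c) -> f x = f y -> x = y).
  { intro c. apply NNPP. intro H'. apply H. exists c. exact H'. }
  set (fc := fun c => epsilon (inhabits (fun _ : X => 0))
     (fun f : X -> nat => forall x y, (S x /\ g x = c) -> (S y /\ g y = c) -> f x = f y -> x = y)).
  exists (fun s => Cantor.to_nat (g s, fc (g s) s)).
  intros x y Sx Sy E.
  apply (f_equal Cantor.of_nat) in E. rewrite !Cantor.cancel_of_to in E.
  injection E as E1 E2. rewrite <- E1 in E2.
  set (c := g x) in *.
  pose proof (epsilon_spec (inhabits (fun _ : X => 0))
     (fun f : X -> nat => forall x y, (S x /\ g x = c) -> (S y /\ g y = c) -> f x = f y -> x = y) (Hc c)) as Hs.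
  simpl in Hs. apply (Hs x y); auto.
Qed.

End Part5.
Import Part5.

Module Part6.
Local Open Scope nat_scope.

Lemma min_ex (P : nat -> Prop) n : P n -> exists l, P l /\ forall k, k < l -> ~ P k.
Proof.
  revert P. induction n as [n IH] using (well_founded_induction lt_wf). intros P Pn.
  destruct (classic (exists k, k < n /\ P k)) as [[k [kn Pk]]|H].
  - apply (IH k kn P Pk).
  - exists n. split; auto. intros k kn Pk. apply H; eauto.
Qed.

Lemma mul_add_inj a b m q q' : a * m + q = b * m + q' -> q < m -> q' < m -> q = q'.
Proof.
  intros E Hq Hq'. destruct (Nat.lt_total a b) as [ab|[->|ba]]; [|lia|].
  - assert (a * m + m <= b * m) by nia. lia.
  - assert (b * m + m <= a * m) by nia. lia.
Qed.

Lemma mul_add_inj2 a b m q q' : a * m + q = b * m + q' -> q < m -> q' < m -> a = b.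
Proof.
  intros E Hq Hq'. pose proof (mul_add_inj _ _ _ _ _ E Hq Hq'). subst q'.
  assert (a * m = b * m) by lia. destruct m; [lia|]. nia.
Qed.

Section Main.
Context {T : Type} (lt : T -> T -> Prop).
Hypothesis irr : forall x, ~ lt x x.
Hypothesis trans : forall x y z, lt x y -> lt y z -> lt x z.
Hypothesis tri : forall x y, lt x y \/ x = y \/ lt y x.
Hypothesis NCT : ~ countable (fun _ : T => True).
Variable F : list T -> Prop.
Hypothesis Hs : is_scheme T lt tau F.
Hypothesis Hcap : fully_capturing T lt tau F.

Notation lev := (level T tau F).
Notation nv := (nv lt tau F).

Definition Bd (k : nat) : nat :=
  match k with O => 0 | S k' => (mm (S k') + tn tau (S k') + 1) * mm (S k') end.

Definition gsel (i p n : nat) : nat := if Nat.testbit (i / 2) p then i else n - i.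

Definition dig (a : T) (k : nat) : nat :=
  match k with
  | O => 0
  | S k' => gsel ((nv a (S k') - nv a k') / (mm k' - gq k')) (nv a k') (tn tau (S k'))
            * mm (S k') + nv a (S k')
  end.

Definition Xr (a : T) : R := Vr Bd (dig a).

Lemma Mm_pos k : 0 < mm k - gq k.
Proof. destruct (tau_type) as [_ H]. destruct (H k) as [_ [H1 _]]. simpl in H1. lia. Qed.

Lemma div_le_self a b : a / b <= a.
Proof. destruct b; [simpl; lia|]. apply Nat.Div0.div_le_upper_bound. nia. Qed.

Lemma dig_cd a k : nv a (S k) < mm (S k) -> cd Bd (dig a) (S k) = dig a (S k).
Proof.
  intro H. unfold cd. apply Nat.min_l. unfold dig, Bd.
  set (q := nv a (S k)) in *. set (p := nv a k).
  set (i := (q - p) / (mm k - gq k)).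
  assert (i <= q) by (unfold i; pose proof (div_le_self (q - p) (mm k - gq k)); lia).
  set (n := tn tau (S k)).
  assert (gsel i p n <= q + n) by (unfold gsel; destruct (Nat.testbit (i / 2) p); lia).
  set (m := mm (S k)) in *. set (g := gsel i p n) in *.
  assert (g * m <= (q + n) * m) by (apply Nat.mul_le_mono_r; auto).
  nia.
Qed.

Lemma dig_eq_below a b l : (forall k, k < l -> nv a k = nv b k) ->
  forall k, k < l -> cd Bd (dig a) k = cd Bd (dig b) k.
Proof.
  intros H k Hk. unfold cd. f_equal. destruct k as [|k]; simpl; auto.
  rewrite !H by lia. auto.
Qed.

Lemma dig_block a l i : Xi_is T lt tau F a (S l) (Some i) ->
  (exists F', lev l F' /\ In a F') /\
  dig a (S l) = gsel i (nv a l) (tn tau (S l)) * mm (S l) + nv a (S l) /\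
  nv a (S l) < mm (S l) /\ i < tn tau (S l) /\ nv a l < mm l.
Proof.
  intro X. destruct (xi_norm lt irr trans tau F Hs l a i X) as [F' [HF' [Ha [E1 [Hi [B1 B2]]]]]].
  split; [exists F'; split; [exact HF'|exact Ha]|]. split; [|split; [exact B1|split; [exact Hi|exact B2]]].
  unfold dig. simpl in E1. rewrite E1.
  rewrite (Nat.add_comm (nv a l) (i * (mm l - gq l))), Nat.add_sub.
  rewrite Nat.div_mul; [auto|]. pose proof (Mm_pos l). lia.
Qed.

Lemma sorted2 x y : lt x y -> fin_set T lt (x :: y :: nil).
Proof. intro. repeat constructor; auto. Qed.

Lemma Xinj a b : Xr a = Xr b -> a = b.
Proof.
  intro E. apply NNPP. intro ne.
  assert (Hc : exists K G, lev K G /\ In a G /\ In b G /\ nv a K <> nv b K).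
  { destruct Hs as [A1 [A2 _]].
    destruct (tri a b) as [ab|[ab|ba]]; [|contradiction|].
    - destruct (A2 _ (sorted2 a b ab)) as [G [HG Inc]].
      destruct (A1 G HG) as [_ [_ [K HK]]]. exists K, G.
      assert (lev K G) by (split; auto).
      assert (In a G) by (apply Inc; simpl; auto). assert (In b G) by (apply Inc; simpl; auto).
      split; auto. split; auto. split; auto.
      pose proof (nv_lt_pos lt irr trans tau F Hs K G a b H H0 H1 ab); lia.
    - destruct (A2 _ (sorted2 b a ba)) as [G [HG Inc]].
      destruct (A1 G HG) as [_ [_ [K HK]]]. exists K, G.
      assert (lev K G) by (split; auto).
      assert (In a G) by (apply Inc; simpl; auto). assert (In b G) by (apply Inc; simpl; auto).
      split; auto. split; auto. split; auto.
      pose proof (nv_lt_pos lt irr trans tau F Hs K G b a H H1 H0 ba); lia. }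
  destruct Hc as [K [G [HG [Ha [Hb Hne]]]]].
  destruct (min_ex (fun l => nv a l <> nv b l) K Hne) as [l [Hl Hmin]].
  assert (lK : l <= K).
  { destruct (le_lt_dec l K); auto. exfalso. apply (Hmin K); auto. }
  assert (Hbel : forall k, k < l -> nv a k = nv b k).
  { intros k Hk. apply NNPP. apply Hmin. auto. }
  destruct l as [|l].
  - apply Hl.
    destruct (lev_down lt tau F Hs K K 0 G a ltac:(lia) HG Ha) as [E0 [HE0 Ha0]].
    destruct (lev_down lt tau F Hs K K 0 G b ltac:(lia) HG Hb) as [E1 [HE1 Hb1]].
    rewrite (nv_zero lt irr tau F Hs E0 a eq_refl HE0 Ha0).
    rewrite (nv_zero lt irr tau F Hs E1 b eq_refl HE1 Hb1). auto.
  - destruct (lev_down lt tau F Hs (K - S l) K (S l) G a ltac:(lia) HG Ha) as [E0 [HE0 Ha0]].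
    destruct (lev_down lt tau F Hs (K - S l) K (S l) G b ltac:(lia) HG Hb) as [E1 [HE1 Hb1]].
    pose proof (nv_bound lt irr trans tau F Hs _ _ _ HE0 Ha0) as Ba.
    pose proof (nv_bound lt irr trans tau F Hs _ _ _ HE1 Hb1) as Bb. simpl tm in Ba, Bb.
    assert (Dne : dig a (S l) <> dig b (S l)).
    { simpl. rewrite (Hbel l) by lia. intro D. apply Hl.
      eapply mul_add_inj; eauto. }
    pose proof (dig_cd a l Ba) as Ca. pose proof (dig_cd b l Bb) as Cb.
    pose proof (dig_eq_below a b (S l) Hbel) as Hb'.
    destruct (Nat.lt_total (dig a (S l)) (dig b (S l))) as [h|[h|h]]; [|contradiction|].
    + assert (Xr a < Xr b)%R.
      { apply (Vr_lt Bd _ _ (S l)); auto. rewrite Ca, Cb; auto. }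
      lra.
    + assert (Xr b < Xr a)%R.
      { apply (Vr_lt Bd _ _ (S l)); auto. intros; symmetry; auto. rewrite Ca, Cb; auto. }
      lra.
Qed.


Definition Eset (x : R) : Prop := exists a, x = Xr a.

Lemma E_unc : ~ countable Eset.
Proof.
  intros [f Hf]. apply NCT. exists (fun a => f (Xr a)). intros x y _ _ H.
  apply Xinj. apply Hf; [exists x|exists y|]; auto.
Qed.

Lemma pre_ex (a : list R) : (forall x, In x a -> Eset x) ->
  exists s, fin_set T lt s /\ forall b, In b s <-> In (Xr b) a.
Proof.
  induction a as [|x a IH]; intro H.
  - exists nil. split; [constructor|]. simpl; tauto.
  - destruct (H x (or_introl eq_refl)) as [b0 ->].
    destruct IH as [s [Ss Es]]. { intros; apply H; simpl; auto. }
    destruct (ss_insert lt trans tri s (to_ss lt trans s Ss) b0) as [s' [S' E']].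
    exists s'. split; [apply StronglySorted_Sorted; auto|].
    intro b. rewrite E', Es. simpl. split.
    + intros [->|h]; auto.
    + intros [h|h]; auto. left. apply Xinj. auto.
Qed.

Lemma rnodup (a : list R) : Sorted Rlt a -> NoDup a.
Proof. apply (sorted_nodup Rlt Rlt_irrefl (fun x y z => Rlt_trans x y z)). Qed.

Lemma half_even u : (2 * u) / 2 = u.
Proof. rewrite Nat.mul_comm. apply Nat.div_mul. lia. Qed.

Lemma half_odd u : (2 * u + 1) / 2 = u.
Proof. rewrite Nat.mul_comm. rewrite Nat.div_add_l by lia. simpl. lia. Qed.

Lemma kent k : k_entangled Eset k.
Proof.
  split; [apply E_unc|]. intros A HA Hdisj HAnc tt.
  destruct k as [|k0].
  { exfalso. apply HAnc. exists (fun _ => 0). intros a b Ha Hb _.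
    destruct (HA a Ha) as [_ [La _]]. destruct (HA b Hb) as [_ [Lb _]].
    destruct a; destruct b; try discriminate; auto. }
  set (k := S k0) in *.
  set (rel := fun s a => fin_set T lt s /\ A a /\ forall b, In b s <-> In (Xr b) a).
  assert (Uq : forall s a s' a' b, rel s a -> rel s' a' -> In b s -> In b s' -> a = a' /\ s = s').
  { intros s a s' a' b [S1 [A1 E1]] [S2 [A2 E2]] H1 H2.
    assert (a = a').
    { apply NNPP; intro ne. apply (Hdisj a a' A1 A2 ne (Xr b)); [apply E1|apply E2]; auto. }
    subst a'. split; auto. apply (sorted_eq lt irr trans); auto. intro x. rewrite E1, E2. tauto. }
  assert (Ne : forall a, A a -> exists x, In x a).
  { intros a Ha. destruct (HA a Ha) as [_ [La _]]. destruct a as [|r a]; [simpl in La; discriminate|].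
    exists r; simpl; auto. }
  assert (Pre : forall a, A a -> exists s, fin_set T lt s /\ forall b, In b s <-> In (Xr b) a).
  { intros a Ha. apply pre_ex. intros x Hx. destruct (HA a Ha) as [_ [_ H]]. apply H; auto. }
  set (S0 := fun s => exists a, rel s a).
  assert (NC0 : ~ countable S0).
  { intros [f Hf]. apply HAnc.
    set (ssel := fun a => epsilon (inhabits nil) (fun s => fin_set T lt s /\ forall b, In b s <-> In (Xr b) a)).
    assert (Hss : forall a, A a -> rel (ssel a) a).
    { intros a Ha. pose proof (epsilon_spec (inhabits nil) (fun s => fin_set T lt s /\ forall b, In b s <-> In (Xr b) a) (Pre a Ha)) as [H1 H2].
      split; [exact H1|split; [exact Ha|exact H2]]. }
    exists (fun a => f (ssel a)). intros a b Ha Hb E.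
    assert (Eq : ssel a = ssel b) by (apply Hf; [exists a; auto|exists b; auto|auto]).
    destruct (Ne a Ha) as [x Hx]. destruct (HA a Ha) as [_ [_ Hx']]. destruct (Hx' x Hx) as [c ->].
    pose proof (Hss a Ha) as Ra. pose proof (Hss b Hb) as Rb.
    assert (Hc : In c (ssel a)) by (apply (proj2 (proj2 Ra)); auto).
    assert (Hc' : In c (ssel b)) by (rewrite <- Eq; exact Hc).
    exact (proj1 (Uq _ _ _ _ c Ra Rb Hc Hc')). }
  set (asel := fun s => epsilon (inhabits nil) (fun a => rel s a)).
  assert (asel_spec : forall s, S0 s -> rel s (asel s)).
  { intros s Hs0. exact (epsilon_spec (inhabits nil) (fun a => rel s a) Hs0). }
  set (Lc := fun s => epsilon (inhabits 0) (fun L => exists G, lev L G /\ incl s G)).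
  assert (Lc_spec : forall s, fin_set T lt s -> exists G, lev (Lc s) G /\ incl s G).
  { intros s Ss. apply (epsilon_spec (inhabits 0) (fun L => exists G, lev L G /\ incl s G)).
    destruct Hs as [A1 [A2 _]]. destruct (A2 s Ss) as [G [HG Inc]].
    destruct (A1 G HG) as [_ [_ [K HK]]]. exists K, G. split; [split; auto|auto]. }
  destruct (pigeon S0 Lc NC0) as [L0 NC1].
  set (S1 := fun s => S0 s /\ Lc s = L0) in *.
  set (cc := fun s => epsilon (inhabits 0) (fun u => forall p q, p < k -> q < k ->
      (Nat.testbit u (p * k + q) = true <-> nth_error (asel s) p = option_map Xr (nth_error s q)))).
  assert (cc_spec : forall s p q, p < k -> q < k ->
      (Nat.testbit (cc s) (p * k + q) = true <-> nth_error (asel s) p = option_map Xr (nth_error s q))).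
  { intro s. apply (epsilon_spec (inhabits 0) (fun u => forall p q, p < k -> q < k ->
      (Nat.testbit u (p * k + q) = true <-> nth_error (asel s) p = option_map Xr (nth_error s q)))).
    destruct (code_exists (k * k) (fun x => exists p q, p < k /\ q < k /\ x = p * k + q /\
        nth_error (asel s) p = option_map Xr (nth_error s q))) as [u [_ Hu]].
    exists u. intros p q Hp Hq. rewrite Hu by nia. split.
    - intros [p' [q' [Hp' [Hq' [E H]]]]].
      pose proof (mul_add_inj _ _ _ _ _ E Hq Hq'). pose proof (mul_add_inj2 _ _ _ _ _ E Hq Hq').
      subst. auto.
    - intro H. exists p, q. auto. }
  destruct (pigeon S1 cc NC1) as [c0 NC2].
  set (S2 := fun s => S1 s /\ cc s = c0) in *.
  assert (Pre2 : forall s, S2 s -> s <> nil /\ fin_set T lt s).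
  { intros s [[[a Ra] _] _]. pose proof Ra as [Ss [Aa Es]]. split; auto.
    destruct (Ne a Aa) as [x Hx]. destruct (HA a Aa) as [_ [_ Hx']]. destruct (Hx' x Hx) as [b ->].
    intro E. subst s. apply Es in Hx. destruct Hx. }
  destruct (Hcap S2 Pre2 NC2 L0) as [l [Ll [D [R [HD [Dinj [Hrtt Hfc]]]]]]].
  destruct l as [|l']; [lia|].
  set (n := tn tau (S l')) in *.
  assert (HDr : forall i, i < n -> rel (D i) (asel (D i)) /\ Lc (D i) = L0 /\ cc (D i) = c0).
  { intros i Hi. destruct (HD i Hi) as [[H0 H1] H2]. split; auto. }
  assert (Hlen : forall i, i < n -> length (D i) = k).
  { intros i Hi. destruct (HDr i Hi) as [[Ss [Aa Es]] _].
    destruct (HA _ Aa) as [Srt [La Ea]].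
    rewrite <- La. rewrite <- (length_map Xr (D i)).
    apply (card_unique (fun x => In x (asel (D i)))).
    - eapply card_ext; [|apply card_list].
      + intro x. rewrite in_map_iff. split.
        * intros [b [<- Hb]]. apply Es; auto.
        * intro Hx. destruct (Ea x Hx) as [b ->]. exists b. split; auto. apply Es; auto.
      + apply NoDup_map_NoDup_ForallPairs.
        * intros x y _ _. apply Xinj.
        * apply (sorted_nodup lt irr trans); auto.
    - apply card_list. apply rnodup; auto. }
  assert (n2 : 2 <= n) by (destruct Hrtt; auto).
  assert (Rnil : R = nil).
  { destruct R as [|x R']; auto. exfalso.
    destruct Hrtt as [_ [_ [_ [_ [I _]]]]].
    destruct (proj2 (I 0 1 ltac:(lia) ltac:(lia) ltac:(lia) x) (or_introl eq_refl)) as [X0 X1].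
    destruct (HDr 0) as [r0 _]; [lia|]. destruct (HDr 1) as [r1 _]; [lia|].
    destruct (Uq _ _ _ _ x r0 r1 X0 X1) as [_ E]. apply Dinj in E; lia. }
  subst R.
  destruct Hfc as [_ [_ [HXi HDel]]].
  assert (d0 : T).
  { pose proof (Hlen 0 ltac:(lia)) as L. destruct (D 0) as [|d0 rest]; [simpl in L; lia|exact d0]. }
  set (el := fun i q => nth q (D i) d0).
  assert (Hel : forall i q, i < n -> q < k -> nth_error (D i) q = Some (el i q)).
  { intros i q Hi Hq. apply nth_error_nth'. rewrite Hlen; auto. }
  assert (HXi' : forall i q, i < n -> q < k -> Xi_is T lt tau F (el i q) (S l') (Some i)).
  { intros i q Hi Hq. apply (proj2 (HXi i q (el i q) Hi ltac:(rewrite Hlen; lia) (Hel i q Hi Hq))).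
    simpl; lia. }
  assert (HDel' : forall i j q, i < j -> j < n -> q < k -> Delta_is T lt tau F (el i q) (el j q) (S l')).
  { intros i j q ij jn Hq. apply (HDel i j q); [exact ij|exact jn|simpl; lia| rewrite Hlen; lia | apply Hel; lia| apply Hel; lia]. }
  assert (Nall : forall i j q k', i < j -> j < n -> q < k -> k' < S l' -> nv (el i q) k' = nv (el j q) k').
  { intros i j q k' ij jn Hq Hk. destruct (HDel' i j q ij jn Hq) as [_ Hk']. apply nv_eq. apply Hk'; auto. }
  assert (Peq : forall i q, i < n -> q < k -> nv (el i q) l' = nv (el 0 q) l').
  { intros [|i] q Hi Hq; auto. symmetry. apply Nall; lia. }
  assert (Pmono : forall q1 q2, q1 < q2 -> q2 < k -> nv (el 0 q1) l' < nv (el 0 q2) l').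
  { intros q1 q2 q12 Hq2.
    destruct (HDr 0 ltac:(lia)) as [[Ss _] [HL _]].
    assert (Lt12 : lt (el 0 q1) (el 0 q2)).
    { apply (ss_nth lt (D 0) (to_ss lt trans _ Ss) q1 q2); auto; apply Hel; lia. }
    destruct (Lc_spec (D 0) Ss) as [G [HG Inc]]. rewrite HL in HG.
    destruct (dig_block _ _ _ (HXi' 0 q2 ltac:(lia) Hq2)) as [[F' [HF' Hin]] _].
    assert (In1 : In (el 0 q1) (D 0)) by (apply (nth_error_In _ q1); apply Hel; lia).
    assert (In2 : In (el 0 q2) (D 0)) by (apply (nth_error_In _ q2); apply Hel; lia).
    assert (In1' : In (el 0 q1) F').
    { apply (lemQ lt tau F Hs (l' - L0) L0 l' G F' (el 0 q2) (el 0 q1)); auto. lia. }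
    apply (nv_lt_pos lt irr trans tau F Hs l' F'); auto. }
  set (f := fun v => exists p q, p < k /\ q < k /\ Nat.testbit c0 (p * k + q) = true /\
            v = nv (el 0 q) l' /\ tt p = true).
  destruct (code_exists (mm l') f) as [u [Hu Hbits]].
  assert (Hn : n = 2 * 2 ^ mm l') by reflexivity.
  set (i := 2 * u). set (j := 2 * u + 1).
  assert (Hi : i < n) by (unfold i; lia). assert (Hj : j < n) by (unfold j; lia).
  destruct (HDr i Hi) as [[Si [Ai Ei]] [_ Ci]].
  destruct (HDr j Hj) as [[Sj [Aj Ej]] [_ Cj]].
  destruct (HDr 0 ltac:(lia)) as [[S0' [A0 E0]] [_ C0]].
  exists (asel (D i)), (asel (D j)). split; [auto|]. split; [auto|]. split.
  { intro E. destruct (Ne _ Ai) as [x Hx]. destruct (HA _ Ai) as [_ [_ Hx']]. destruct (Hx' x Hx) as [b ->].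
    assert (Bi : In b (D i)) by (apply Ei; auto).
    assert (Bj : In b (D j)) by (apply Ej; rewrite <- E; auto).
    destruct (Uq _ _ _ _ b (conj Si (conj Ai Ei)) (conj Sj (conj Aj Ej)) Bi Bj) as [_ E'].
    apply Dinj in E'; auto. unfold i, j in E'. lia. }
  intros p x y Hp Hx Hy.
  assert (Hxin : In x (asel (D i))) by (eapply nth_error_In; eauto).
  destruct (HA _ Ai) as [_ [_ Hx']]. destruct (Hx' x Hxin) as [al ->].
  assert (Hal : In al (D i)) by (apply Ei; auto).
  destruct (In_nth_error _ _ Hal) as [q Hq].
  assert (Hqk : q < k) by (rewrite <- (Hlen i Hi); apply nth_error_Some; rewrite Hq; discriminate).
  assert (Bit : Nat.testbit c0 (p * k + q) = true).
  { rewrite <- Ci. apply cc_spec; auto. rewrite Hx, Hq. reflexivity. }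
  assert (Ey : nth_error (asel (D j)) p = option_map Xr (nth_error (D j) q)).
  { apply cc_spec; auto. rewrite Cj. auto. }
  rewrite Hy, (Hel j q Hj Hqk) in Ey. simpl in Ey. injection Ey as ->.
  rewrite (Hel i q Hi Hqk) in Hq. injection Hq as <-.
  set (P := nv (el 0 q) l').
  destruct (dig_block _ _ _ (HXi' i q Hi Hqk)) as [_ [Di [Qi [_ Pi]]]].
  destruct (dig_block _ _ _ (HXi' j q Hj Hqk)) as [_ [Dj [Qj [_ Pj]]]].
  rewrite (Peq i q Hi Hqk) in Di, Pi. rewrite (Peq j q Hj Hqk) in Dj.
  fold P in Di, Dj, Pi.
  assert (Below : forall k', k' < S l' -> cd Bd (dig (el i q)) k' = cd Bd (dig (el j q)) k').
  { apply dig_eq_below. intros k' Hk'. apply Nall; auto. unfold i, j; lia. }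
  pose proof (dig_cd (el i q) l' Qi) as CDi. pose proof (dig_cd (el j q) l' Qj) as CDj.
  unfold gsel in Di, Dj. fold n in Di, Dj.
  rewrite (half_even u : i / 2 = u) in Di. rewrite (half_odd u : j / 2 = u) in Dj.
  assert (HiE : i = 2 * u) by reflexivity. assert (HjE : j = 2 * u + 1) by reflexivity.
  set (Qi' := nv (el i q) (S l')) in *. set (Qj' := nv (el j q) (S l')) in *.
  set (m := mm (S l')) in *.
  destruct (tt p) eqn:Htt.
  - assert (Tb : Nat.testbit u P = true).
    { apply Hbits; auto. exists p, q. repeat split; auto. }
    rewrite Tb in Di, Dj.
    apply (Vr_lt Bd _ _ (S l')); auto. rewrite CDi, CDj, Di, Dj. nia.
  - assert (Tb : Nat.testbit u P = false).
    { destruct (Nat.testbit u P) eqn:E; auto. exfalso.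
      destruct (proj1 (Hbits P Pi) E) as [p2 [q2 [Hp2 [Hq2 [B2 [EP T2]]]]]].
      assert (q2 = q).
      { destruct (Nat.lt_total q2 q) as [h|[h|h]]; auto.
        - pose proof (Pmono q2 q h Hqk). unfold P in EP. lia.
        - pose proof (Pmono q q2 h Hq2). unfold P in EP. lia. }
      subst q2.
      assert (E1 : nth_error (asel (D 0)) p2 = option_map Xr (nth_error (D 0) q)).
      { apply cc_spec; auto. rewrite C0. auto. }
      assert (E2 : nth_error (asel (D 0)) p = option_map Xr (nth_error (D 0) q)).
      { apply cc_spec; auto. rewrite C0. auto. }
      destruct (HA _ A0) as [Srt0 [La0 _]].
      assert (p2 = p).
      { apply (proj1 (NoDup_nth_error _) (rnodup _ Srt0)); [rewrite La0; auto|]. rewrite E1, E2; auto. }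
      subst p2. rewrite Htt in T2. discriminate. }
    rewrite Tb in Di, Dj. unfold Rgt.
    apply (Vr_lt Bd _ _ (S l')); auto. { intros; symmetry; auto. } rewrite CDi, CDj, Di, Dj. nia.
Qed.

Lemma ent : entangled Eset.
Proof. split; [apply E_unc|apply kent]. Qed.

End Main.


End Part6.
Import Part6.

Theorem mainTheorem14 :
  forall (T : Type) (lt : T -> T -> Prop),
    is_omega1 T lt -> FCA_Delta T lt ->
    exists E : R -> Prop, entangled E.
Proof.
  intros T lt [irr [trans [tri [_ [NCT _]]]]] FCA.
  destruct (FCA tau tau_type tau_good) as [F [Hs Hcap]].
  eexists. apply (ent lt irr trans tri NCT F Hs Hcap).
Qed.
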